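(* Let $f_1,\dots,f_n:\mathbb{R}^d\to\mathbb{R}$ be such that each $f_i$ is $L_i$-smooth and has a minimizer $x_i$, let $\alpha_1,\dots,\alpha_n\in(0,1)$ and $\tilde f(x) = \frac{1}{n}\sum_{i=1}^n f_i(\alpha_i x + (1-\alpha_i)x_i)$. Then for every $x\in\mathbb{R}^d$, \[ \|\nabla \tilde f(x)\| \leq \frac{1}{n}\sum_{i=1}^n \alpha_i^2 L_i\|x - x_i\| \quad\text{and}\quad \tilde f(x) \leq \frac{1}{n}\sum_{i=1}^n f_i(x_i) + \frac{1}{2n}\sum_{i=1}^n\alpha_i^2 L_i\|x-x_i\|^2. \]
   Context: A differentiable $g$ is $L$-smooth if $\|\nabla g(x)-\nabla g(y)\|\leq L\|x-y\|$ for all $x,y$. *)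

(* Defs.v *)
From HB Require Import structures.
From mathcomp Require Import all_boot all_order all_algebra.
From mathcomp Require Import all_classical all_reals all_analysis.
Set Implicit Arguments. Unset Strict Implicit. Unset Printing Implicit Defensive.
Import Order.TTheory GRing.Theory Num.Theory.
Import numFieldNormedType.Exports.
Local Open Scope ring_scope.

(* Euclidean norm on R^d. (The library's canonical norm on matrices is the
   sup norm, so we define the Euclidean one explicitly.) *)
Definition enorm {R : realType} {d : nat} (v : 'rV[R]_d) : R :=
  Num.sqrt (\sum_(j < d) v ord0 j ^+ 2).

Definition grad {R : realType} {d : nat} (g : 'rV[R]_d -> R) (x : 'rV[R]_d)
  : 'rV[R]_d :=
  \row_(j < d) 'D_(delta_mx ord0 j) g x.

Definition Lsmooth {R : realType} {d : nat} (L : R) (g : 'rV[R]_d -> R) : Prop :=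
  (forall x, differentiable g x) /\
  (forall x y, enorm (grad g x - grad g y) <= L * enorm (x - y)).

Definition is_minimizer {R : realType} {d : nat} (g : 'rV[R]_d -> R)
  (x : 'rV[R]_d) : Prop := forall y, g x <= g y.

Definition ftilde {R : realType} {d n : nat} (f : 'I_n -> 'rV[R]_d -> R)
  (alpha : 'I_n -> R) (xs : 'I_n -> 'rV[R]_d) (x : 'rV[R]_d) : R :=
  n%:R^-1 * \sum_(i < n) f i (alpha i *: x + (1 - alpha i) *: xs i).

(* Main.v *)
Require Import Defs.
From HB Require Import structures.
From mathcomp Require Import all_boot all_order all_algebra.
From mathcomp Require Import all_classical all_reals all_analysis.
From mathcomp Require Import ring lra.
Import Order.TTheory GRing.Theory Num.Theory.
Import numFieldNormedType.Exports.
Local Open Scope ring_scope.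

Section Norm.
Context {R : realType} {d : nat}.
Implicit Types u v : 'rV[R]_d.

Definition dot u v : R := \sum_(j < d) u ord0 j * v ord0 j.

Lemma sq_ge0 u : 0 <= dot u u.
Proof. by apply: sumr_ge0 => j _; rewrite -expr2 sqr_ge0. Qed.

Lemma enormE u : enorm u = Num.sqrt (dot u u).
Proof. by rewrite /enorm /dot; under eq_bigr do rewrite expr2. Qed.

Lemma enorm_ge0 u : 0 <= enorm u.
Proof. exact: sqrtr_ge0. Qed.

Lemma enorm_sq u : enorm u ^+ 2 = dot u u.
Proof. by rewrite enormE sqr_sqrtr // sq_ge0. Qed.

Lemma dotC u v : dot u v = dot v u.
Proof. by apply: eq_bigr => j _; rewrite mulrC. Qed.

Lemma dotDl u v w : dot (u + v) w = dot u w + dot v w.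
Proof. by rewrite /dot -big_split; apply: eq_bigr => j _; rewrite !mxE mulrDl. Qed.

Lemma dotZl a u v : dot (a *: u) v = a * dot u v.
Proof. by rewrite /dot mulr_sumr; apply: eq_bigr => j _; rewrite !mxE mulrA. Qed.

Lemma dotDr u v w : dot w (u + v) = dot w u + dot w v.
Proof. by rewrite dotC dotDl !(dotC w). Qed.

Lemma dotZr a u v : dot v (a *: u) = a * dot v u.
Proof. by rewrite dotC dotZl dotC. Qed.

Lemma dot0 u : dot u u = 0 -> forall v, dot u v = 0.
Proof.
move=> h v.
have h0 : forall j, u ord0 j = 0.
  move=> j; apply/eqP; rewrite -sqrf_eq0 expr2; apply/eqP.
  move/eqP: h; rewrite psumr_eq0 => [/allP H|]; last by move=> k _; rewrite -expr2 sqr_ge0.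
  by apply/eqP; apply: (H j); rewrite mem_index_enum.
by rewrite /dot big1 // => j _; rewrite h0 mul0r.
Qed.

Lemma CS u v : dot u v ^+ 2 <= dot u u * dot v v.
Proof.
have [B0|Bpos] := eqVneq (dot v v) 0.
  by rewrite dotC (@dot0 v B0 u) B0 expr0n /= mulr0.
have Bgt : 0 < dot v v by rewrite lt0r Bpos sq_ge0.
set t := - (dot u v / dot v v).
have := sq_ge0 (u + t *: v).
rewrite !dotDl !dotDr !dotZl !dotZr (dotC v u).
rewrite /t.
move: Bgt; set A := dot u u; set B := dot v v; set C := dot u v => Bgt H.
have : 0 <= (A * B - C ^+ 2) / B.
  by move: H; congr (_ <= _); field; rewrite gt_eqF.
by rewrite pmulr_lge0 ?invr_gt0 // subr_ge0.
Qed.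

Lemma dot_le u v : dot u v <= enorm u * enorm v.
Proof.
rewrite !enormE -sqrtrM ?sq_ge0 //.
apply: (le_trans (ler_norm _)).
by rewrite -sqrtr_sqr ler_sqrt ?mulr_ge0 ?sq_ge0 // CS.
Qed.

Lemma enormZ a u : enorm (a *: u) = `|a| * enorm u.
Proof.
by rewrite !enormE dotZl dotZr mulrA -expr2 sqrtrM ?sqr_ge0 // sqrtr_sqr.
Qed.

Lemma enormD u v : enorm (u + v) <= enorm u + enorm v.
Proof.
have h0 : 0 <= enorm u + enorm v by rewrite addr_ge0 ?enorm_ge0.
rewrite [X in X <= _]enormE -(ger0_norm h0) -sqrtr_sqr ler_sqrt ?sqr_ge0 //.
rewrite dotDl !dotDr (dotC v u) sqrrD !enorm_sq.
have := dot_le u v; lra.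
Qed.

Lemma enormN u : enorm (- u) = enorm u.
Proof. by rewrite -scaleN1r enormZ normrN normr1 mul1r. Qed.

Lemma enorm_sum n (F : 'I_n -> 'rV[R]_d) :
  enorm (\sum_(i < n) F i) <= \sum_(i < n) enorm (F i).
Proof.
elim/big_ind2 : _ => //.
  by rewrite enormE /dot big1 ?sqrtr0 // => j _; rewrite mxE mul0r.
move=> x1 x2 y1 y2 h1 h2; apply: le_trans (enormD _ _) _; exact: lerD.
Qed.


Lemma D_affine (f : 'rV[R]_d -> R) (a : R) (c x v : 'rV[R]_d) :
  'D_v (fun y => f (a *: y + c)) x = 'D_(a *: v) f (a *: x + c) /\
  (derivable (fun y => f (a *: y + c)) x v <-> derivable f (a *: x + c) (a *: v)).
Proof.
rewrite /derive /derivable /=.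
suff -> : (fun h : R => h^-1 *: (f (a *: (h *: v + x) + c) - f (a *: x + c)))
  = (fun h : R => h^-1 *: (f (h *: (a *: v) + (a *: x + c)) - f (a *: x + c))) by [].
apply/funext => h /=.
congr (_ *: (f _ - _)).
by rewrite scalerDr !scalerA [a * h]mulrC addrA.
Qed.

Lemma D_path (f : 'rV[R]_d -> R) (p v : 'rV[R]_d) (t : R) :
  'D_1 (fun s : R => f (s *: v + p)) t = 'D_v f (t *: v + p) /\
  (derivable (fun s : R => f (s *: v + p)) t 1 <-> derivable f (t *: v + p) v).
Proof.
rewrite /derive /derivable /=.
suff -> : (fun h : R => h^-1 *: (f ((h *: 1 + t) *: v + p) - f (t *: v + p)))
  = (fun h : R => h^-1 *: (f (h *: v + (t *: v + p)) - f (t *: v + p))) by [].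
apply/funext => h /=.
congr (_ *: (f _ - _)).
by rewrite [h *: 1]mulr1 scalerDl addrA.
Qed.

Lemma D_grad (f : 'rV[R]_d -> R) (p v : 'rV[R]_d) :
  differentiable f p -> 'D_v f p = dot (grad f p) v.
Proof.
move=> df; rewrite deriveE // {1}(row_sum_delta v) linear_sum /dot.
apply: eq_bigr => j _; rewrite linearZ /= /grad mxE deriveE // [RHS]mulrC; done.
Qed.

Lemma grad_min (f : 'rV[R]_d -> R) (p : 'rV[R]_d) :
  (forall x, differentiable f x) -> is_minimizer f p -> grad f p = 0.
Proof.
move=> df hm; apply/rowP => j; rewrite !mxE.
set e := delta_mx ord0 j.
have dg : forall t, derivable (fun s : R => f (s *: e + p)) t 1.
  by move=> t; apply/(D_path f p e t).2; exact: diff_derivable.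
have := @derive1_at_min R (fun s : R => f (s *: e + p)) (-1) 1 0.
case.
- lra.
- by move=> t _; apply: dg.
- by rewrite in_itv /=; apply/andP; split; lra.
- by move=> t _; rewrite scale0r add0r; apply: hm.
move=> _; rewrite (D_path f p e 0).1 scale0r add0r => ->.
by [].
Qed.

Lemma descent (f : 'rV[R]_d -> R) (L : R) (p q : 'rV[R]_d) :
  Lsmooth L f -> grad f p = 0 -> f q <= f p + L / 2 * enorm (q - p) ^+ 2.
Proof.
move=> [df hL] g0.
set v := q - p; rewrite enorm_sq.
set c := L / 2 * dot v v.
pose g s := f (s *: v + p).
have dg t : derivable g t 1.
  by apply/(D_path f p v t).2; exact: diff_derivable.
have Dg t : 'D_1 g t = dot (grad f (t *: v + p)) v.
  by rewrite (D_path f p v t).1 D_grad.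
pose h := g - cst c * (@id R) ^+ 2.
have dh (t : R) : derivable h t 1 /\ 'D_1 h t = 'D_1 g t - c * (2 * t).
  have H : is_derive t 1 h ('D_1 g t - (cst c t *: ((2%:R * id t ^+ 1) *: 1) + (@id R ^+ 2) t *: 0)).
    rewrite /h; apply: is_deriveB; first exact: derivableP.
  split; first exact: ex_derive.
  by rewrite derive_val /= scaler0 addr0 expr1 [_%:A]mulr1.
have key : forall x : R, x \in `]0, 1[%R -> derive1 h x <= 0.
  move=> x; rewrite in_itv /= => /andP [x0 x1].
  rewrite derive1E (dh x).2 Dg subr_le0.
  apply: (le_trans (dot_le _ _)).
  have e1 : enorm (grad f (x *: v + p)) <= L * x * enorm v.
    have := hL (x *: v + p) p.
    by rewrite g0 subr0 addrK enormZ gtr0_norm // mulrA.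
  apply: (le_trans (ler_wpM2r (enorm_ge0 v) e1)).
  rewrite -[_ * enorm v * enorm v]mulrA -expr2 enorm_sq /c.
  by rewrite (_ : L / 2 * dot v v * (2 * x) = L * x * dot v v) //; field.
have := @ler0_derive1_nincr R h 0 1 (fun x _ => (dh x).1) key
  (derivable_within_continuous (fun x (_ : x \in `[0, 1]%R) => (dh x).1)) 0 1.
rewrite lexx ler01 => /(_ isT isT (lexx _)).
move=> H.
have : f (1 *: v + p) - c * 1 ^+ 2 <= f (0 *: v + p) - c * 0 ^+ 2 := H.
rewrite scale0r scale1r add0r expr1n expr0n /= mulr1 mulr0 subr0.
rewrite /v subrK; lra.
Qed.

Lemma dot_delta u (j : 'I_d) : dot u (delta_mx ord0 j) = u ord0 j.
Proof.
rewrite /dot (bigD1 j) //= big1 ?addr0; first by rewrite mxE !eqxx mulr1.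
by move=> k /negPf kj; rewrite mxE kj andbF mulr0.
Qed.

Lemma grad_ftilde n (f : 'I_n -> 'rV[R]_d -> R) (alpha : 'I_n -> R)
  (xs : 'I_n -> 'rV[R]_d) (x : 'rV[R]_d) :
  (forall i y, differentiable (f i) y) ->
  grad (ftilde f alpha xs) x =
  n%:R^-1 *: \sum_(i < n) alpha i *: grad (f i) (alpha i *: x + (1 - alpha i) *: xs i).
Proof.
move=> df.
pose F i := fun y => f i (alpha i *: y + (1 - alpha i) *: xs i).
have E : ftilde f alpha xs = n%:R^-1 \*: (\sum_(i < n) F i).
  by apply/funext => y; rewrite /ftilde fct_sumE.
have dF : forall i v, derivable (F i) x v.
  by move=> i v; apply/(D_affine (f i) (alpha i) _ x v).2; exact: diff_derivable.
apply/rowP => j; rewrite /grad !mxE E deriveZ; last exact: derivable_sum.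
rewrite derive_sum // summxE; congr (_ * _); apply: eq_bigr => i _.
rewrite (D_affine (f i) (alpha i) _ x _).1 D_grad // dotZr dot_delta !mxE.
by [].
Qed.
End Norm.

Theorem lemma1 (R : realType) (d n : nat)
  (f : 'I_n -> 'rV[R]_d -> R) (L : 'I_n -> R) (xs : 'I_n -> 'rV[R]_d)
  (alpha : 'I_n -> R)
  (hsmooth : forall i, Lsmooth (L i) (f i))
  (hmin : forall i, is_minimizer (f i) (xs i))
  (halpha : forall i, 0 < alpha i < 1) :
  forall x : 'rV[R]_d,
    enorm (grad (ftilde f alpha xs) x)
      <= n%:R^-1 * \sum_(i < n) alpha i ^+ 2 * L i * enorm (x - xs i)
    /\
    ftilde f alpha xs x
      <= n%:R^-1 * \sum_(i < n) f i (xs i)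
         + (2 * n%:R)^-1 * \sum_(i < n) alpha i ^+ 2 * L i * enorm (x - xs i) ^+ 2.
Proof.
move=> x.
have dfi i := (hsmooth i).1.
have g0 i : grad (f i) (xs i) = 0 := @grad_min _ _ (f i) (xs i) (dfi i) (hmin i).
have a0 i : 0 < alpha i by case/andP: (halpha i).
have yE i : alpha i *: x + (1 - alpha i) *: xs i - xs i = alpha i *: (x - xs i).
  by rewrite scalerBl scale1r scalerBr addrA addrAC addrK.
have nge0 : 0 <= n%:R^-1 :> R by rewrite invr_ge0 ler0n.
split.
  rewrite grad_ftilde // enormZ ger0_norm //.
  apply: ler_wpM2l => //.
  apply: le_trans (enorm_sum _ _) _.
  apply: ler_sum => i _.
  rewrite enormZ gtr0_norm //.
  have := (hsmooth i).2 (alpha i *: x + (1 - alpha i) *: xs i) (xs i).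
  rewrite g0 subr0 yE enormZ gtr0_norm // => H.
  have -> : alpha i ^+ 2 * L i * enorm (x - xs i) = alpha i * (L i * (alpha i * enorm (x - xs i))) by ring.
  by rewrite ler_pM2l.
rewrite /ftilde.
apply: (@le_trans _ _ (n%:R^-1 * \sum_(i < n) (f i (xs i) + L i / 2 * enorm (alpha i *: x + (1 - alpha i) *: xs i - xs i) ^+ 2))).
  apply: ler_wpM2l => //.
  apply: ler_sum => i _.
  exact: (@descent _ _ (f i) (L i) (xs i) _ (hsmooth i) (g0 i)).
rewrite big_split /= mulrDr lerD2l invfM !mulr_sumr.
apply/ler_sum => i _; rewrite yE enormZ gtr0_norm // exprMn.
by rewrite le_eqVlt; apply/orP; left; apply/eqP; ring.
Qed.
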